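(* Let $(M,d)$ be a bounded metric space and let $\mathcal S$ be a group acting on $M$ such that each $s\in\mathcal S$ is an orbit-nonexpansive self-mapping of $M$. Then $\mathcal S$ is a family of interlaced orbit-nonexpansive mappings, i.e. $d(tx,sy)\le \sup\{D(x,o_r(y)): r\in\mathcal S\}$ for all $s,t\in\mathcal S$ and $x,y\in M$.
   Context: For a metric space $(M,d)$, a mapping $T:M\to M$ and $x\in M$, the orbit of $x$ is $o_T(x)=\{x\}\cup\{T^nx:n\in\mathbb N\}$. For $x\in M$ and bounded $A\subseteq M$, $D(x,A)=\sup\{d(x,a):a\in A\}$. A mapping $T:M\to M$ is orbit-nonexpansive if $d(Tx,Ty)\le D(x,o_T(y))$ for all $x,y\in M$. A group $\mathcal S$ acts on $M$ if each $s\in\mathcal S$ defines a map $M\to M$, the identity element acts as the identity map, and $(s\cdot t)(x)=s(t(x))$ for all $s,t\in\mathcal S$, $x\in M$. A family $\mathcal F$ of self-mappings of a bounded metric space $M$ is a family of interlaced orbit-nonexpansive mappings if $d(Tx,Sy)\le\sup\{D(x,o_R(y)):R\in\mathcal F\}$ for all $T,S\in\mathcal F$ and $x,y\in M$. *)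

(* Defs.v *)
From Stdlib Require Import Reals.
From Coquelicot Require Import Coquelicot.
Open Scope R_scope.

Definition is_metric {M : Type} (d : M -> M -> R) : Prop :=
  (forall x y, 0 <= d x y) /\
  (forall x y, d x y = 0 <-> x = y) /\
  (forall x y, d x y = d y x) /\
  (forall x y z, d x z <= d x y + d y z).

Definition bounded_metric {M : Type} (d : M -> M -> R) : Prop :=
  exists B : R, forall x y, d x y <= B.

Definition orbit {M : Type} (T : M -> M) (x : M) : M -> Prop :=
  fun z => exists n : nat, z = Nat.iter n T x.

(* D(x,A) = sup { d(x,a) : a ∈ A } (finite for bounded nonempty A). *)
Definition Dsup {M : Type} (d : M -> M -> R) (x : M) (A : M -> Prop) : R :=
  real (Lub_Rbar (fun r => exists a, A a /\ r = d x a)).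

Definition orbit_nonexpansive {M : Type} (d : M -> M -> R) (T : M -> M) : Prop :=
  forall x y, d (T x) (T y) <= Dsup d x (orbit T y).

Definition is_group {G : Type} (mul : G -> G -> G) (e : G) (inv : G -> G) : Prop :=
  (forall a b c, mul a (mul b c) = mul (mul a b) c) /\
  (forall a, mul e a = a /\ mul a e = a) /\
  (forall a, mul (inv a) a = e /\ mul a (inv a) = e).

Definition is_action {G M : Type} (mul : G -> G -> G) (e : G) (act : G -> M -> M) : Prop :=
  (forall x, act e x = x) /\
  (forall s t x, act (mul s t) x = act s (act t x)).

Definition interlaced_orbit_nonexpansive {I M : Type} (d : M -> M -> R) (F : I -> M -> M) : Prop :=
  forall (t s : I) (x y : M),
    d (F t x) (F s y) <=
      real (Lub_Rbar (fun r => exists i : I, r = Dsup d x (orbit (F i) y))).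

(* Main.v *)
Require Import Defs.
From Stdlib Require Import Reals Lra.
From Coquelicot Require Import Coquelicot.
Open Scope R_scope.

Lemma lub_prop (E : R -> Prop) r0 B :
  E r0 -> (forall r, E r -> r <= B) ->
  r0 <= real (Lub_Rbar E) /\ real (Lub_Rbar E) <= B.
Proof.
  intros H0 HB.
  destruct (Lub_Rbar_correct E) as [Hub Hlub].
  assert (H1 : Rbar_le r0 (Lub_Rbar E)) by (apply Hub; exact H0).
  assert (H2 : Rbar_le (Lub_Rbar E) B).
  { apply Hlub. intros r Hr. simpl. apply HB. exact Hr. }
  destruct (Lub_Rbar E); simpl in *; try contradiction; split; auto.
Qed.

Lemma iter_act (M G : Type) (mul : G -> G -> G) (e : G) (act : G -> M -> M)
  (Ha : is_action mul e act) t r y n :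
  Nat.iter n (act t) (act r y) = act (Nat.iter n (mul t) r) y.
Proof.
  destruct Ha as [_ Hm].
  induction n as [|n IH]; simpl; auto.
  rewrite IH, Hm; reflexivity.
Qed.

Theorem proposition3p2 (M G : Type) (d : M -> M -> R)
  (mul : G -> G -> G) (e : G) (inv : G -> G) (act : G -> M -> M) :
  is_metric d -> bounded_metric d ->
  is_group mul e inv -> is_action mul e act ->
  (forall s : G, orbit_nonexpansive d (act s)) ->
  interlaced_orbit_nonexpansive d act.
Proof.
  intros Hmet [B HB] [Hass [Hid Hinv]] Hact Hne t s x y.
  set (S := real (Lub_Rbar (fun r => exists i : G, r = Dsup d x (orbit (act i) y)))).
  assert (HDB : forall i, Dsup d x (orbit (act i) y) <= B).
  { intro i. unfold Dsup.
    apply (lub_prop _ (d x y)).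
    - exists y; split; [exists 0%nat; reflexivity | reflexivity].
    - intros r [a [_ ->]]. apply HB. }
  assert (Hpt : forall r, d x (act r y) <= S).
  { intro r.
    apply Rle_trans with (Dsup d x (orbit (act r) y)).
    - unfold Dsup. apply (lub_prop _ _ B).
      + exists (act r y); split; [exists 1%nat; reflexivity | reflexivity].
      + intros r' [a [_ ->]]. apply HB.
    - unfold S. apply (lub_prop _ _ B).
      + exists r; reflexivity.
      + intros r' [i ->]. apply HDB. }
  set (z := act (mul (inv t) s) y).
  assert (Hz : act t z = act s y).
  { unfold z. destruct Hact as [_ Hm]. rewrite <- Hm, Hass.
    destruct (Hinv t) as [_ ->]. destruct (Hid s) as [-> _]. reflexivity. }
  rewrite <- Hz.
  apply Rle_trans with (Dsup d x (orbit (act t) z)); [apply Hne|].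
  unfold Dsup. apply (lub_prop _ (d x z) S).
  - exists z; split; [exists 0%nat; reflexivity | reflexivity].
  - intros r [a [[n ->] ->]]. unfold z.
    rewrite (iter_act M G mul e act Hact). apply Hpt.
Qed.
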